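(* Let $\mathcal A=(Q,\Sigma,\delta,\rho)$ be a connected bireversible Mealy automaton whose labeled orbit tree $\mathfrak t(\mathcal A)$ has no active self-liftable branch, and let $\mathfrak j$ be a jungle tree with trunk of length $n$. Then for every $i\in\{1,\dots,n\}$, every $\sim$-class $\gamma$ of stems and every $\mathbf u\in Q^{i-1}$ which is a prefix of some stem in $\gamma$, the set $\{q\in Q : \mathbf uq \text{ is a prefix of some stem in } \gamma\}$ has at least $2$ elements; that is, $\mathcal S_{\mathrm{eq}}(i)\ge 2$.
   Context: Mealy automata. A Mealy automaton is $\mathcal A=(Q,\Sigma,\delta,\rho)$ with $Q,\Sigma$ finite non-empty sets, $\delta=(\delta_i\colon Q\to Q)_{i\in\Sigma}$, $\rho=(\rho_x\colon\Sigma\to\Sigma)_{x\in Q}$; transitions $x\xrightarrow{i\mid\rho_x(i)}\delta_i(x)$. Invertible: each $\rho_x$ a permutation of $\Sigma$; reversible: each $\delta_i$ a permutation of $Q$; bireversible: invertible, reversible, and for each $j\in\Sigma$ the map $x\mapsto\delta_{\rho_x^{-1}(j)}(x)$ is a permutation of $Q$. Connected: the directed graph on $Q$ with edges $x\to\delta_i(x)$ is connected. Extensions: $\rho_x(i\mathbf s)=\rho_x(i)\rho_{\delta_i(x)}(\mathbf s)$; $\rho_{x_1\cdots x_m}=\rho_{x_m}\circ\cdots\circ\rho_{x_1}$; $\delta_i(x\mathbf u)=\delta_i(x)\delta_{\rho_x(i)}(\mathbf u)$ on $Q^*$, $\delta_{i_1\cdots i_m}=\delta_{i_m}\circ\cdots\circ\delta_{i_1}$.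 The connected components of $\mathcal A^n$ (stateset $Q^n$, transitions $\mathbf u\xrightarrow{i\mid\rho_{\mathbf u}(i)}\delta_i(\mathbf u)$) are, for reversible $\mathcal A$, the orbits of $Q^n$ under the maps $\delta_{\mathbf s}$. Orbit tree $\mathfrak t(\mathcal A)$: vertices at level $n\ge0$ are the connected components of $\mathcal A^n$; an edge from the component of $\mathbf u\in Q^n$ to that of $\mathbf ux$ for all $\mathbf u,x$; edge $C\to D$ labeled $\#D/\#C$. $\top,\bot$ = first/last vertex of a downward path; level of an edge/path = level of its top vertex. A word of $Q^*\cup Q^\omega$ represents the initial path through the components of its prefixes. Edge $e$ is liftable to $f$ if every word of $\bot(e)$ has a suffix in $\bot(f)$; paths are liftable if corresponding edges are. $f$ is a legitimate child of $e$ if $\top(f)=\bot(e)$ and $f$ is liftable to $e$. A path/subtree $\mathfrak s$ is $k$-self-liftable if for all $i\ge0$ every path in $\mathfrak s$ starting at level $i+k$ is liftable to a path in $\mathfrak s$ starting at level $i$; self-liftable if $k$-self-liftable for some $k>0$. A branch (infinite initial path) is active if its labels are not eventually all $1$. Jungle trees: for a finite 1-self-liftable initial path $\mathbf e$ of length $n$ whose last edge has at least two legitimate children, all labeled $1$, $\mathfrak j(\mathbf e)$ consists of $\mathbf e$ plus all edges descending from $\bot(\mathbf e)$ that are liftable to the last edge of $\mathbf e$. Stems: the words of $\bot(\mathbf e)\subseteq Q^n$. A $\mathfrak j$-word is a word representing an initial path of $\mathfrak j$. For stems $\mathbf u,\mathbf v$: $\mathbf u\sim\mathbf v$ iff there is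 $\mathbf s\in Q^*$ such that $\mathbf{usv}$ is a $\mathfrak j$-word and $\rho_{\mathbf{us}}$ is the identity of $\Sigma^*$; $\sim$ is an equivalence relation. $\mathcal S_{\mathrm{eq}}(i)$ denotes the cardinality of $\{q\in Q:\mathbf uq$ is a prefix of a stem in $\gamma\}$ for $\mathbf u\in Q^{i-1}$ a prefix of a stem in a $\sim$-class $\gamma$; this number does not depend on the choice of $\mathbf u$ and $\gamma$. *)

(* Defs.v *)
From mathcomp Require Import all_boot all_order all_algebra.
Set Implicit Arguments. Unset Strict Implicit. Unset Printing Implicit Defensive.

Section Mealy.
Variables (Q S : finType) (delta : S -> Q -> Q) (rho : Q -> S -> S).

Fixpoint rhoW (x : Q) (s : seq S) : seq S :=
  if s is i :: s' then rho x i :: rhoW (delta i x) s' else [::].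

Definition rhoQ (u : seq Q) (s : seq S) : seq S :=
  foldl (fun t x => rhoW x t) s u.

Fixpoint deltaQ (i : S) (u : seq Q) : seq Q :=
  if u is x :: u' then delta i x :: deltaQ (rho x i) u' else [::].

Definition deltaS (s : seq S) (u : seq Q) : seq Q :=
  foldl (fun v i => deltaQ i v) u s.

Definition invertible : Prop := forall x : Q, injective (rho x).
Definition reversible : Prop := forall i : S, injective (delta i).
Definition bireversible : Prop :=
  reversible /\
  exists inv : (forall x : Q, injective (rho x)),
    forall j : S, injective (fun x : Q => delta (invF (inv x) j) x).

Definition autEdge : rel Q :=
  fun x y => [exists i, delta i x == y] || [exists i, delta i y == x].
Definition connected_aut : Prop := forall x y : Q, connect autEdge x y.

Definition powEdge (n : nat) : rel (n.-tuple Q) :=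
  fun u v => [exists i, deltaQ i u == v :> seq Q]
          || [exists i, deltaQ i v == u :> seq Q].

Definition sameComp (u v : seq Q) : bool :=
  (size v == size u) &&
  connect (@powEdge (size u)) (in_tuple u) (insubd (in_tuple u) v).

Definition compCard (u : seq Q) : nat :=
  #|[set v : (size u).-tuple Q | connect (@powEdge (size u)) (in_tuple u) v]|.

(* A vertex at level n is the component of a word of length n.
   An edge at level m (from level m to level m+1) is represented by any word
   w of length m+1 of its bottom vertex: it goes from the component of
   take m w to the component of w. *)
Definition label (w : seq Q) : rat :=
  ((compCard w)%:R / (compCard (take (size w).-1 w))%:R)%R.

(* edge (with bottom word) we is liftable to edge (with bottom word) wf:
   every word of bot(e) has a suffix in bot(f) *)
Definition liftE (we wf : seq Q) : Prop :=
  forall v, sameComp v we -> sameComp (drop (size v - size wf) v) wf.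

(* a branch: an infinite initial path, given by its vertices:
   b n is a word of length n representing the vertex at level n *)
Definition isBranch (b : nat -> seq Q) : Prop :=
  forall n, size (b n) = n /\ sameComp (take n (b n.+1)) (b n).

(* the edge of the branch at level m has bottom word b m.+1 *)
Definition activeBranch (b : nat -> seq Q) : Prop :=
  ~ (exists N, forall m, N <= m -> label (b m.+1) = 1%R).

(* k-self-liftable branch: every path in b starting at level i+k is liftable
   to the path in b starting at level i (of the same length), edgewise *)
Definition kSelfLiftableBranch (k : nat) (b : nat -> seq Q) : Prop :=
  forall i j, liftE (b (i + k + j).+1) (b (i + j).+1).

Definition selfLiftableBranch (b : nat -> seq Q) : Prop :=
  exists2 k, 0 < k & kSelfLiftableBranch k b.

Definition noActiveSelfLiftableBranch : Prop :=
  forall b, isBranch b -> selfLiftableBranch b -> ~ activeBranch b.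

(* Finite initial path e of length n = size w, represented by a word w of its
   bottom vertex; its edge at level m < n has bottom word take m.+1 w. *)
Definition oneSelfLiftableInit (w : seq Q) : Prop :=
  forall i j, i + 1 + j < size w ->
    liftE (take (i + 1 + j).+1 w) (take (i + j).+1 w).

(* f (bottom word v) is a legitimate child of the last edge of e (bottom
   word w): top(f) = bot(e) and f is liftable to that last edge *)
Definition legitChild (w v : seq Q) : Prop :=
  size v = (size w).+1 /\ sameComp (take (size w) v) w /\ liftE v w.

Definition jungleTrunk (w : seq Q) : Prop :=
  0 < size w /\ oneSelfLiftableInit w /\
  (exists v1 v2, legitChild w v1 /\ legitChild w v2 /\ ~ sameComp v1 v2) /\
  (forall v, legitChild w v -> label v = 1%R).

Definition inJungle (w e : seq Q) : Prop :=
  (size e <= size w /\ sameComp e (take (size e) w)) \/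
  (size w < size e /\ sameComp (take (size w) e) w /\ liftE e w).

Definition jWord (w z : seq Q) : Prop :=
  forall l, l < size z -> inJungle w (take l.+1 z).

Definition stem (w v : seq Q) : Prop := sameComp v w.

Definition simStem (w u v : seq Q) : Prop :=
  exists s : seq Q, jWord w (u ++ s ++ v) /\
    forall t : seq S, rhoQ (u ++ s) t = t.

Definition isSimClass (w : seq Q) (gamma : seq Q -> Prop) : Prop :=
  (exists g, gamma g) /\
  forall g, gamma g -> forall v, gamma v <-> (stem w v /\ simStem w g v).

End Mealy.

(* Main.v *)
Require Import Defs.
From mathcomp Require Import all_boot all_order all_algebra.
From mathcomp Require Import zify.
Set Implicit Arguments. Unset Strict Implicit. Unset Printing Implicit Defensive.

Section Helpers.
Variables (Q S : finType) (delta : S -> Q -> Q) (rho : Q -> S -> S).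
Local Notation dQ := (deltaQ delta rho).
Local Notation sC := (sameComp delta rho).

Lemma size_dQ i u : size (dQ i u) = size u.
Proof. by elim: u i => //= x u IH i; rewrite IH. Qed.

Definition edg (a b : seq Q) := exists i, dQ i a = b \/ dQ i b = a.

Inductive cl : seq Q -> seq Q -> Prop :=
| cl_refl a : cl a a
| cl_step a b c : edg a b -> cl b c -> cl a c.

Lemma cl_size a b : cl a b -> size b = size a.
Proof.
elim=> // x y z [i [<-|<-]] _ ->; by rewrite size_dQ.
Qed.

Lemma cl_trans a b c : cl a b -> cl b c -> cl a c.
Proof. elim=> // x y z e _ IH h; exact: cl_step e (IH h). Qed.

Lemma cl_sym a b : cl a b -> cl b a.
Proof.
elim=> [x|x y z [i e] _ IH]; first exact: cl_refl.
apply: cl_trans IH _; apply: cl_step (cl_refl _); exists i; tauto.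
Qed.

Lemma sC_cl a b : sC a b -> cl a b.
Proof.
rewrite /sameComp => /andP [/eqP hs /connectP [p hp hl]].
have key: forall (x : (size a).-tuple Q) p,
    path (@powEdge _ _ delta rho (size a)) x p -> cl x (last x p).
  move=> x p0; elim: p0 x => [|y p0 IH] x /=; first by constructor.
  case/andP=> e hp'; apply: cl_step (IH _ hp').
  case/orP: e => /existsP [i /eqP e]; exists i; tauto.
have := key _ _ hp; rewrite -hl /= val_insubd /= hs eqxx //.
Qed.

Lemma cl_sC a b : cl a b -> sC a b.
Proof.
move=> h; have hs := cl_size h; rewrite /sameComp hs eqxx /=.
have gen: forall n x c, cl x c -> forall (tx tc : n.-tuple Q),
   val tx = x -> val tc = c -> connect (@powEdge _ _ delta rho n) tx tc.
  move=> n x c; elim=> [y|y z c' e hc IH] tx tc ex ec.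
    by have -> : tx = tc by apply: val_inj; rewrite ex ec.
  have sz : size z == n.
    case: e => i [<-|e]; first by rewrite size_dQ -ex size_tuple.
    by rewrite -(size_dQ i) e -ex size_tuple.
  pose tz := insubd tx z.
  have ez : val tz = z by rewrite val_insubd sz.
  apply: connect_trans (IH tz tc ez ec); apply: connect1.
  case: e => i [e|e]; apply/orP; [left|right]; apply/existsP; exists i;
    by apply/eqP; move: ex ez => /= -> ->.
apply: (gen _ a b h) => //; by rewrite val_insubd hs eqxx.
Qed.

Lemma take_dQ k i u : take k (dQ i u) = dQ i (take k u).
Proof. by elim: u i k => [|x u IH] i [|k] //=; rewrite IH. Qed.

Lemma drop_dQ k i u : exists j, drop k (dQ i u) = dQ j (drop k u).
Proof.
elim: u i k => [|x u IH] i [|k] /=; try by exists i.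
exact: IH.
Qed.

Lemma cl_take k a b : cl a b -> cl (take k a) (take k b).
Proof.
elim=> [x|x y z [i e] _ IH]; first exact: cl_refl.
apply: cl_step IH; exists i; rewrite -!take_dQ.
by case: e => <-; tauto.
Qed.

Lemma cl_drop k a b : cl a b -> cl (drop k a) (drop k b).
Proof.
elim=> [x|x y z [i [e|e]] _ IH]; first exact: cl_refl.
  apply: cl_step IH; have [j hj] := drop_dQ k i x; exists j; left; by rewrite -hj e.
apply: cl_step IH; have [j hj] := drop_dQ k i y; exists j; right; by rewrite -hj e.
Qed.

Lemma dQ_rcons i a : exists j, forall c, dQ i (rcons a c) = rcons (dQ i a) (delta j c).
Proof.
elim: a i => [|x a IH] i /=; first by exists i.
have [j hj] := IH (rho x i); exists j => c; by rewrite hj.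
Qed.

Lemma cl_rcons (hrev : reversible delta) a b : cl a b ->
  forall c, exists c', cl (rcons a c) (rcons b c').
Proof.
elim=> [x|x y z [i [e|e]] _ IH] c; first by exists c; exact: cl_refl.
  have [j hj] := dQ_rcons i x; have [c' h] := IH (delta j c).
  exists c'; apply: cl_step h; exists i; left; by rewrite hj e.
have [j hj] := dQ_rcons i y.
have [c' h] := IH (invF (hrev j) c).
exists c'; apply: cl_step h; exists i; right; by rewrite hj e f_invF.
Qed.

Local Notation jW := (jWord delta rho).
Local Notation lE := (liftE delta rho).

Lemma jW_last w p : jW w p -> 0 < size p -> inJungle delta rho w p.
Proof. move=> h hp; have := h (size p).-1; rewrite prednK // take_size; exact. Qed.

Lemma jW_catl w a b : jW w (a ++ b) -> jW w a.
Proof. move=> h l hl; have := h l; rewrite size_cat takel_cat //; apply; lia. Qed.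

Lemma jW_rcons w p q : jW w p -> inJungle delta rho w (rcons p q) -> jW w (rcons p q).
Proof.
move=> hp hj l; rewrite size_rcons ltnS leq_eqVlt; case/orP => [/eqP ->|hl].
  by rewrite take_oversize // size_rcons.
by rewrite -cats1 takel_cat //; apply: hp.
Qed.

Lemma ext1 (hrev : reversible delta) w p v : jW w p -> 0 < size w -> size w <= size p ->
  legitChild delta rho w v ->
  exists q, cl (rcons (drop (size p - size w) p) q) v /\ jW w (rcons p q).
Proof.
move=> hp n0 hn [hsv [htv hlv]].
have hr : sC (drop (size p - (size w)) p) w.
  case: (jW_last hp (leq_trans n0 hn)) => [[hs hc] | [hs [hc hl]]].
    have e : size p = (size w) by apply/eqP; rewrite eqn_leq hs hn.
    by move: hc; rewrite e subnn drop0 take_size.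
  by apply: hl; apply: cl_sC; exact: cl_refl.
have ht : sC (take (size w) p) w.
  have := hp (size w).-1; rewrite prednK // => /(_ (leq_trans hn (leqnn _))).
  case=> [[_ hc]|[hs _]]; first by move: hc; rewrite size_takel // take_size.
  by rewrite size_takel // ltnn in hs.
case/lastP: v hsv htv hlv => [//|v' c] hsv htv hlv.
have sv' : size v' = (size w) by move: hsv; rewrite size_rcons => -[].
have etv : take (size w) (rcons v' c) = v' by rewrite -cats1 takel_cat ?sv' // -sv' take_size.
move: htv; rewrite etv => htv.
have hc : cl v' (drop (size p - (size w)) p).
  exact: cl_trans (sC_cl htv) (cl_sym (sC_cl hr)).
have [q hq] := cl_rcons hrev hc c.
exists q; split; first exact: cl_sym.
apply: jW_rcons => //; right; split; first by rewrite size_rcons; lia.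
split; first by rewrite -cats1 takel_cat.
move=> y hy; have hy' := sC_cl hy.
have sy : size y = (size p).+1 by rewrite -(cl_size hy') size_rcons.
have := cl_drop (size p - (size w)) hy'.
rewrite drop_rcons ?leq_subr // => hd.
have := hlv (drop (size p - (size w)) y) (cl_sC (cl_trans hd (cl_sym hq))).
rewrite drop_drop size_drop.
have -> : (size y - (size p - (size w)) - (size w) + (size p - (size w))) = size y - (size w) by lia.
by [].
Qed.

Lemma ext (hrev : reversible delta) w p : jungleTrunk delta rho w -> jW w p -> size w <= size p ->
  exists q1 q2, q1 <> q2 /\ jW w (rcons p q1) /\ jW w (rcons p q2).
Proof.
move=> [n0 [_ [[v1 [v2 [h1 [h2 hne]]]] _]]] hp hn.
have [q1 [c1 j1]] := ext1 hrev hp n0 hn h1.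
have [q2 [c2 j2]] := ext1 hrev hp n0 hn h2.
exists q1, q2; split=> // e; apply: hne; apply: cl_sC.
by subst q2; exact: cl_trans (cl_sym c1) c2.
Qed.

Lemma extN (hrev : reversible delta) w : jungleTrunk delta rho w -> forall k p, jW w p -> size w <= size p ->
  exists e, size e = k /\ jW w (p ++ e).
Proof.
move=> hj; elim=> [|k IH] p hp hn; first by exists [::]; rewrite cats0.
have [q1 [_ [_ [h1 _]]]] := ext hrev hj hp hn.
have hs : size w <= size (rcons p q1) by rewrite size_rcons; lia.
have [e [he hj']] := IH _ h1 hs.
by exists (q1 :: e); rewrite /= he -cat_rcons.
Qed.

End Helpers.

Theorem corollary5p16 (Q S : finType) (delta : S -> Q -> Q) (rho : Q -> S -> S)
  (hQ : 0 < #|Q|) (hS : 0 < #|S|)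
  (hconn : connected_aut delta)
  (hbirev : bireversible delta rho)
  (hnoact : noActiveSelfLiftableBranch delta rho)
  (n : nat) (w : seq Q) (hn : size w = n)
  (hj : jungleTrunk delta rho w) :
  forall i : nat, 1 <= i <= n ->
  forall gamma : seq Q -> Prop, isSimClass delta rho w gamma ->
  forall u : seq Q, size u = i.-1 -> (exists v, gamma v /\ prefix u v) ->
  exists q1 q2 : Q, q1 <> q2 /\
    (exists v, gamma v /\ prefix (rcons u q1) v) /\
    (exists v, gamma v /\ prefix (rcons u q2) v).
Proof.
have hrev : reversible delta := hbirev.1.
move=> i /andP [hi1 hin] gamma [_ hcls] u hu [v0 [hv0 hpre]].
have [hstem0 [s [hjw hid]]] := (hcls v0 hv0 v0).1 hv0.
have sv0 : size v0 = n by move: hstem0; rewrite /stem /sameComp => /andP [/eqP e _]; rewrite -hn e.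
have n0 : 0 < n by rewrite -hn; case: hj.
move: hpre; rewrite prefixE => /eqP htk.
have ev0 : v0 = u ++ drop (size u) v0 by rewrite -{1}htk cat_take_drop.
set x := v0 ++ s.
have hxu : jWord delta rho w (x ++ u).
  apply: (@jW_catl _ _ _ _ _ _ (drop (size u) v0)).
  by rewrite -catA -ev0 /x -catA.
have hsz : size w <= size (x ++ u) by rewrite /x !size_cat; lia.
have [q1 [q2 [hne [j1 j2]]]] := ext hrev hj hxu hsz.
have build : forall q, jWord delta rho w (rcons (x ++ u) q) ->
    exists v, gamma v /\ prefix (rcons u q) v.
  move=> q jq.
  have hsz' : size w <= size (rcons (x ++ u) q) by rewrite size_rcons; lia.
  have [e [he je]] := extN hrev hj (n - i) jq hsz'.
  exists (rcons u q ++ e); split; last exact: prefix_prefix.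
  have ez : rcons (x ++ u) q ++ e = x ++ (rcons u q ++ e) by rewrite -!cats1 !catA.
  have sve : size (rcons u q ++ e) = n by rewrite size_cat size_rcons he hu; lia.
  apply/(hcls v0 hv0); split; last first.
    exists s; split; last exact: hid.
    by move: je; rewrite ez /x -catA.
  rewrite /stem.
  have := jW_last je; rewrite ez size_cat sve => /(_ ltac:(lia)).
  case=> [[hs _]|[_ [_ hl]]].
    move: hs; rewrite size_cat sve hn /x size_cat; lia.
  have := hl _ (cl_sC (@cl_refl _ _ delta rho _)).
  rewrite size_cat sve hn.
  have -> : size x + n - n = size x by lia.
  by rewrite drop_size_cat.
exists q1, q2; split => //; split; exact: build.
Qed.
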